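(* Let $\mathcal{C}_1$ and $\mathcal{C}_2$ be any two disjoint maximal commuting classes of two-qubit Pauli operators ($d=4$). Then there exists a third maximal commuting class $\mathcal{C}_3'$ of Pauli operators, disjoint from $\mathcal{C}_1$ and $\mathcal{C}_2$, such that the common eigenbases of $\mathcal{C}_1,\mathcal{C}_2,\mathcal{C}_3'$ form a weakly unextendible set of three mutually unbiased bases in $\mathbb{C}^4$.
   Context: Two-qubit Pauli operators are the tensor products $P_1\otimes P_2$ with $P_k\in\{I,X,Y,Z\}$. A maximal commuting class in $d=4$ is a set of $3$ mutually commuting non-identity two-qubit Pauli operators. Two orthonormal bases of $\mathbb{C}^d$ are mutually unbiased if $|\langle a|b\rangle|=1/\sqrt d$ for all vectors $a$ of the first and $b$ of the second; common eigenbases of pairwise disjoint maximal commuting Pauli classes are mutually unbiased. A set of mutually unbiased bases obtained as common eigenbases of Pauli classes is weakly unextendible if there is no further basis, unbiased to all of them, that is the common eigenbasis of a maximal commuting class of Pauli operators. *)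

(* Defs.v *)
(* Two-qubit Pauli operators as concrete 4x4 complex
   matrices over algC; bases of C^4 as 4x4 matrices whose columns are the
   basis vectors. *)
From HB Require Import structures.
From mathcomp Require Import all_boot all_order all_algebra all_field.
From mathcomp Require Import mxtens.
Set Implicit Arguments. Unset Strict Implicit. Unset Printing Implicit Defensive.
Import Order.TTheory GRing.Theory Num.Theory.
Local Open Scope ring_scope.

(* single-qubit Paulis: 0 = I, 1 = X, 2 = Y, 3 = Z *)
Definition pauli1 (k : 'I_4) : 'M[algC]_2 :=
  match val k with
  | 0%N => 1%:M
  | 1%N => \matrix_(i < 2, j < 2) (if i == j then 0 else 1)
  | 2%N => \matrix_(i < 2, j < 2)
             (if i == j then 0 else if (val i == 0%N) then - 'i else 'i)
  | _ => \matrix_(i < 2, j < 2)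
             (if i == j then (if val i == 0%N then 1 else -1) else 0)
  end.

Definition pauli_label := ('I_4 * 'I_4)%type.

Definition pauli (p : pauli_label) : 'M[algC]_4 :=
  (pauli1 p.1 *t pauli1 p.2 : 'M_(2 * 2)).

Definition identity_label : pauli_label := (ord0, ord0).

Definition max_commuting_class (C : {set pauli_label}) : Prop :=
  #|C| = 3%N /\ identity_label \notin C /\
  (forall p q, p \in C -> q \in C -> pauli p *m pauli q = pauli q *m pauli p).

Definition adjmx (n m : nat) (A : 'M[algC]_(n, m)) : 'M[algC]_(m, n) :=
  (map_mx (fun x : algC => x^*) A)^T.

Definition inner (a b : 'cV[algC]_4) : algC := (adjmx a *m b) 0 0.

Definition orthonormal_basis (B : 'M[algC]_4) : Prop := adjmx B *m B = 1%:M.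

Definition common_eigenbasis (C : {set pauli_label}) (B : 'M[algC]_4) : Prop :=
  orthonormal_basis B /\
  forall p, p \in C -> forall j : 'I_4,
    exists lambda : algC, pauli p *m col j B = lambda *: col j B.

Definition unbiased (A B : 'M[algC]_4) : Prop :=
  forall i j : 'I_4, `|inner (col i A) (col j B)| = (sqrtC 4%:R)^-1.

Definition mutually_unbiased (s : seq 'M[algC]_4) : Prop :=
  forall i j : nat, (i < size s)%N -> (j < size s)%N -> i <> j ->
    unbiased (nth 0 s i) (nth 0 s j).

Definition weakly_unextendible (s : seq 'M[algC]_4) : Prop :=
  mutually_unbiased s /\
  ~ (exists (C : {set pauli_label}) (B : 'M[algC]_4),
        max_commuting_class C /\ common_eigenbasis C B /\
        forall A, A \in s -> unbiased A B).

(* Main.v *)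
Require Import Defs.
From HB Require Import structures.
From mathcomp Require Import all_boot all_order all_algebra all_field.
From mathcomp Require Import mxtens.
From mathcomp Require Import ring.
Set Implicit Arguments. Unset Strict Implicit. Unset Printing Implicit Defensive.
Import Order.TTheory GRing.Theory Num.Theory.
Local Open Scope ring_scope.

Definition o4 : seq 'I_4 := [:: @Ordinal 4 0 isT; @Ordinal 4 1 isT; @Ordinal 4 2 isT; @Ordinal 4 3 isT].
Definition oL : seq pauli_label := [seq (a, b) | a <- o4, b <- o4].
Definition o15 : seq 'I_15 := [:: @Ordinal 15 0 isT; @Ordinal 15 1 isT; @Ordinal 15 2 isT; @Ordinal 15 3 isT; @Ordinal 15 4 isT; @Ordinal 15 5 isT; @Ordinal 15 6 isT; @Ordinal 15 7 isT; @Ordinal 15 8 isT; @Ordinal 15 9 isT; @Ordinal 15 10 isT; @Ordinal 15 11 isT; @Ordinal 15 12 isT; @Ordinal 15 13 isT; @Ordinal 15 14 isT].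
Definition fa4 (P : pred 'I_4) := all P o4.
Definition faL (P : pred pauli_label) := all P oL.
Definition fa15 (P : pred 'I_15) := all P o15.
Definition ex4 (P : pred 'I_4) := has P o4.
Definition exL (P : pred pauli_label) := has P oL.
Definition ex15 (P : pred 'I_15) := has P o15.

Definition gi := (int * int)%type.
Definition g0 : gi := (0, 0).
Definition gadd (x y : gi) : gi := (x.1 + y.1, x.2 + y.2).
Definition gmul (x y : gi) : gi := (x.1 * y.1 - x.2 * y.2, x.1 * y.2 + x.2 * y.1).
Definition gconj (x : gi) : gi := (x.1, - x.2).
Definition emb (x : gi) : algC := x.1%:~R + x.2%:~R * 'i.
Definition gsum (f : 'I_4 -> gi) : gi := foldr (fun j acc => gadd (f j) acc) g0 o4.

Definition p1Z (k : 'I_4) (i j : 'I_2) : gi :=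
  match val k with
  | 0%N => if i == j then (Posz 1, Posz 0) else g0
  | 1%N => if i == j then g0 else (Posz 1, Posz 0)
  | 2%N => if i == j then g0 else if val i == 0%N then (Posz 0, Negz 0) else (Posz 0, Posz 1)
  | _ => if i == j then (if val i == 0%N then (Posz 1, Posz 0) else (Negz 0, Posz 0)) else g0
  end.

Definition pZ (p : pauli_label) (i j : 'I_4) : gi :=
  gmul (p1Z p.1 (@mxtens_unindex 2 2 i).1 (@mxtens_unindex 2 2 j).1)
       (p1Z p.2 (@mxtens_unindex 2 2 i).2 (@mxtens_unindex 2 2 j).2).

Definition gmm (A B : 'I_4 -> 'I_4 -> gi) i j := gsum (fun k => gmul (A i k) (B k j)).
Definition commb (p q : pauli_label) :=
  fa4 (fun i => fa4 (fun j => gmm (pZ p) (pZ q) i j == gmm (pZ q) (pZ p) i j)).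
Definition class_nat : seq (seq (nat*nat)) := [::
  [:: (0,1); (1,0); (1,1)];
  [:: (0,1); (2,0); (2,1)];
  [:: (0,1); (3,0); (3,1)];
  [:: (0,2); (1,0); (1,2)];
  [:: (0,2); (2,0); (2,2)];
  [:: (0,2); (3,0); (3,2)];
  [:: (0,3); (1,0); (1,3)];
  [:: (0,3); (2,0); (2,3)];
  [:: (0,3); (3,0); (3,3)];
  [:: (1,1); (2,2); (3,3)];
  [:: (1,1); (2,3); (3,2)];
  [:: (1,2); (2,1); (3,3)];
  [:: (1,2); (2,3); (3,1)];
  [:: (1,3); (2,1); (3,2)];
  [:: (1,3); (2,2); (3,1)]].
Definition basis_nat : seq (seq (seq (int*int))) := [::
  [:: [:: (Posz 1, Posz 0); (Posz 1, Posz 0); (Posz 1, Posz 0); (Posz 1, Posz 0)]; [:: (Posz 1, Posz 0); (Posz 1, Posz 0); (Negz 0, Posz 0); (Negz 0, Posz 0)]; [:: (Posz 1, Posz 0); (Negz 0, Posz 0); (Posz 1, Posz 0); (Negz 0, Posz 0)]; [:: (Posz 1, Posz 0); (Negz 0, Posz 0); (Negz 0, Posz 0); (Posz 1, Posz 0)]];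
  [:: [:: (Posz 1, Posz 0); (Posz 1, Posz 0); (Posz 0, Posz 1); (Posz 0, Posz 1)]; [:: (Posz 1, Posz 0); (Posz 1, Posz 0); (Posz 0, Negz 0); (Posz 0, Negz 0)]; [:: (Posz 1, Posz 0); (Negz 0, Posz 0); (Posz 0, Posz 1); (Posz 0, Negz 0)]; [:: (Posz 1, Posz 0); (Negz 0, Posz 0); (Posz 0, Negz 0); (Posz 0, Posz 1)]];
  [:: [:: (Posz 1, Posz 0); (Posz 1, Posz 0); (Posz 0, Posz 0); (Posz 0, Posz 0)]; [:: (Posz 0, Posz 0); (Posz 0, Posz 0); (Posz 1, Posz 0); (Posz 1, Posz 0)]; [:: (Posz 1, Posz 0); (Negz 0, Posz 0); (Posz 0, Posz 0); (Posz 0, Posz 0)]; [:: (Posz 0, Posz 0); (Posz 0, Posz 0); (Posz 1, Posz 0); (Negz 0, Posz 0)]];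
  [:: [:: (Posz 1, Posz 0); (Posz 0, Posz 1); (Posz 1, Posz 0); (Posz 0, Posz 1)]; [:: (Posz 1, Posz 0); (Posz 0, Posz 1); (Negz 0, Posz 0); (Posz 0, Negz 0)]; [:: (Posz 1, Posz 0); (Posz 0, Negz 0); (Posz 1, Posz 0); (Posz 0, Negz 0)]; [:: (Posz 1, Posz 0); (Posz 0, Negz 0); (Negz 0, Posz 0); (Posz 0, Posz 1)]];
  [:: [:: (Posz 1, Posz 0); (Posz 0, Posz 1); (Posz 0, Posz 1); (Negz 0, Posz 0)]; [:: (Posz 1, Posz 0); (Posz 0, Posz 1); (Posz 0, Negz 0); (Posz 1, Posz 0)]; [:: (Posz 1, Posz 0); (Posz 0, Negz 0); (Posz 0, Posz 1); (Posz 1, Posz 0)]; [:: (Posz 1, Posz 0); (Posz 0, Negz 0); (Posz 0, Negz 0); (Negz 0, Posz 0)]];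
  [:: [:: (Posz 1, Posz 0); (Posz 0, Posz 1); (Posz 0, Posz 0); (Posz 0, Posz 0)]; [:: (Posz 0, Posz 0); (Posz 0, Posz 0); (Posz 1, Posz 0); (Posz 0, Posz 1)]; [:: (Posz 1, Posz 0); (Posz 0, Negz 0); (Posz 0, Posz 0); (Posz 0, Posz 0)]; [:: (Posz 0, Posz 0); (Posz 0, Posz 0); (Posz 1, Posz 0); (Posz 0, Negz 0)]];
  [:: [:: (Posz 1, Posz 0); (Posz 0, Posz 0); (Posz 1, Posz 0); (Posz 0, Posz 0)]; [:: (Posz 1, Posz 0); (Posz 0, Posz 0); (Negz 0, Posz 0); (Posz 0, Posz 0)]; [:: (Posz 0, Posz 0); (Posz 1, Posz 0); (Posz 0, Posz 0); (Posz 1, Posz 0)]; [:: (Posz 0, Posz 0); (Posz 1, Posz 0); (Posz 0, Posz 0); (Negz 0, Posz 0)]];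
  [:: [:: (Posz 1, Posz 0); (Posz 0, Posz 0); (Posz 0, Posz 1); (Posz 0, Posz 0)]; [:: (Posz 1, Posz 0); (Posz 0, Posz 0); (Posz 0, Negz 0); (Posz 0, Posz 0)]; [:: (Posz 0, Posz 0); (Posz 1, Posz 0); (Posz 0, Posz 0); (Posz 0, Posz 1)]; [:: (Posz 0, Posz 0); (Posz 1, Posz 0); (Posz 0, Posz 0); (Posz 0, Negz 0)]];
  [:: [:: (Posz 1, Posz 0); (Posz 0, Posz 0); (Posz 0, Posz 0); (Posz 0, Posz 0)]; [:: (Posz 0, Posz 0); (Posz 0, Posz 0); (Posz 1, Posz 0); (Posz 0, Posz 0)]; [:: (Posz 0, Posz 0); (Posz 1, Posz 0); (Posz 0, Posz 0); (Posz 0, Posz 0)]; [:: (Posz 0, Posz 0); (Posz 0, Posz 0); (Posz 0, Posz 0); (Posz 1, Posz 0)]];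
  [:: [:: (Posz 0, Posz 0); (Posz 1, Posz 0); (Posz 1, Posz 0); (Posz 0, Posz 0)]; [:: (Posz 1, Posz 0); (Posz 0, Posz 0); (Posz 0, Posz 0); (Posz 1, Posz 0)]; [:: (Posz 1, Posz 0); (Posz 0, Posz 0); (Posz 0, Posz 0); (Negz 0, Posz 0)]; [:: (Posz 0, Posz 0); (Posz 1, Posz 0); (Negz 0, Posz 0); (Posz 0, Posz 0)]];
  [:: [:: (Posz 1, Posz 0); (Posz 0, Posz 1); (Posz 0, Posz 1); (Posz 1, Posz 0)]; [:: (Posz 1, Posz 0); (Posz 0, Negz 0); (Posz 0, Negz 0); (Posz 1, Posz 0)]; [:: (Posz 1, Posz 0); (Posz 0, Negz 0); (Posz 0, Posz 1); (Negz 0, Posz 0)]; [:: (Posz 1, Posz 0); (Posz 0, Posz 1); (Posz 0, Negz 0); (Negz 0, Posz 0)]];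
  [:: [:: (Posz 1, Posz 0); (Posz 0, Posz 0); (Posz 0, Posz 0); (Posz 0, Posz 1)]; [:: (Posz 0, Posz 0); (Posz 1, Posz 0); (Posz 0, Negz 0); (Posz 0, Posz 0)]; [:: (Posz 0, Posz 0); (Posz 1, Posz 0); (Posz 0, Posz 1); (Posz 0, Posz 0)]; [:: (Posz 1, Posz 0); (Posz 0, Posz 0); (Posz 0, Posz 0); (Posz 0, Negz 0)]];
  [:: [:: (Posz 1, Posz 0); (Negz 0, Posz 0); (Posz 0, Posz 1); (Posz 0, Posz 1)]; [:: (Posz 1, Posz 0); (Posz 1, Posz 0); (Posz 0, Negz 0); (Posz 0, Posz 1)]; [:: (Posz 1, Posz 0); (Posz 1, Posz 0); (Posz 0, Posz 1); (Posz 0, Negz 0)]; [:: (Posz 1, Posz 0); (Negz 0, Posz 0); (Posz 0, Negz 0); (Posz 0, Negz 0)]];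
  [:: [:: (Posz 1, Posz 0); (Posz 0, Negz 0); (Posz 1, Posz 0); (Posz 0, Posz 1)]; [:: (Posz 1, Posz 0); (Posz 0, Posz 1); (Posz 1, Posz 0); (Posz 0, Negz 0)]; [:: (Posz 1, Posz 0); (Posz 0, Posz 1); (Negz 0, Posz 0); (Posz 0, Posz 1)]; [:: (Posz 1, Posz 0); (Posz 0, Negz 0); (Negz 0, Posz 0); (Posz 0, Negz 0)]];
  [:: [:: (Posz 1, Posz 0); (Posz 1, Posz 0); (Posz 1, Posz 0); (Negz 0, Posz 0)]; [:: (Posz 1, Posz 0); (Negz 0, Posz 0); (Posz 1, Posz 0); (Posz 1, Posz 0)]; [:: (Posz 1, Posz 0); (Negz 0, Posz 0); (Negz 0, Posz 0); (Negz 0, Posz 0)]; [:: (Posz 1, Posz 0); (Posz 1, Posz 0); (Negz 0, Posz 0); (Posz 1, Posz 0)]]].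

Definition cls (c : 'I_15) (p : pauli_label) : bool :=
  (val p.1, val p.2) \in nth [::] class_nat c.
Definition ev (c : 'I_15) (k i : 'I_4) : gi := nth g0 (nth [::] (nth [::] basis_nat c) k) i.
Definition ginner (v w : 'I_4 -> gi) := gsum (fun i => gmul (gconj (v i)) (w i)).
Definition kk c k : int := (ginner (ev c k) (ev c k)).1.
Definition normsq (g : gi) : int := g.1 * g.1 + g.2 * g.2.
Definition pv p (v : 'I_4 -> gi) i := gsum (fun k => gmul (pZ p i k) (v k)).
Definition eigv c p k : int := if fa4 (fun i => pv p (ev c k) i == ev c k i) then 1 else -1.
Definition gsc (z : int) (x : gi) : gi := (z * x.1, z * x.2).
Definition disjc a b := faL (fun p => ~~ (cls a p && cls b p)).
Definition meets a b := exL (fun p => cls a p && cls b p).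
Definition check1 := faL (fun x => (x != identity_label) ==> faL (fun y =>
  [&& y != identity_label, x != y & commb x y] ==> faL (fun z =>
  [&& z != identity_label, x != z, y != z, commb x z & commb y z] ==>
  ex15 (fun c => faL (fun p => ((p == x) || (p == y) || (p == z)) == cls c p))))).
Lemma check1_ok : check1. Proof. vm_compute. reflexivity. Qed.
Definition check2 := fa15 (fun c1 => fa15 (fun c2 => disjc c1 c2 ==>
   ex15 (fun c3 => [&& disjc c3 c1, disjc c3 c2 &
       fa15 (fun c => [|| meets c c1, meets c c2 | meets c c3])]))).
Lemma check2_ok : check2. Proof. vm_compute. reflexivity. Qed.
Definition check_cls := fa15 (fun c => [&& count (cls c) oL == 3%N, ~~ cls c identity_label &
   faL (fun p => faL (fun q => cls c p && cls c q ==> commb p q))]).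
Lemma check_cls_ok : check_cls. Proof. vm_compute. reflexivity. Qed.
Definition check_basis := fa15 (fun c => fa4 (fun k => fa4 (fun m =>
   [&& 0 < kk c k, ginner (ev c k) (ev c m) == (if k == m then (kk c k, 0) else g0),
       (k != m) ==> exL (fun p => cls c p && (eigv c p k != eigv c p m)) &
       faL (fun p => cls c p ==> fa4 (fun i => pv p (ev c k) i == gsc (eigv c p k) (ev c k i)))]))).
Lemma check_basis_ok : check_basis. Proof. vm_compute. reflexivity. Qed.
Definition check_unb := fa15 (fun c1 => fa15 (fun c2 => disjc c1 c2 ==> fa4 (fun k => fa4 (fun m =>
   4 * normsq (ginner (ev c1 k) (ev c2 m)) == kk c1 k * kk c2 m)))).
Lemma check_unb_ok : check_unb. Proof. vm_compute. reflexivity. Qed.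
Definition check_pauli := faL (fun p => [&& fa4 (fun i => fa4 (fun j => gconj (pZ p j i) == pZ p i j)) &
   (p != identity_label) ==> ex4 (fun i => ex4 (fun j => (i != j) && (pZ p i j != g0) || (pZ p i i != pZ p j j)))]).
Lemma check_pauli_ok : check_pauli. Proof. vm_compute. reflexivity. Qed.

Lemma mem_o4 (x : 'I_4) : x \in o4.
Proof. by case: x => [[|[|[|[|n]]]] H]. Qed.
Lemma mem_o15 (x : 'I_15) : x \in o15.
Proof. by case: x => [[|[|[|[|[|[|[|[|[|[|[|[|[|[|[|n]]]]]]]]]]]]]]] H]. Qed.
Lemma mem_oL (x : pauli_label) : x \in oL.
Proof. case: x => a b; apply/allpairsP; exists (a, b); by rewrite !mem_o4. Qed.
Lemma fa4P P : fa4 P -> forall x, P x.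
Proof. by move/allP => H x; apply: H; rewrite mem_o4. Qed.
Lemma faLP P : faL P -> forall x, P x.
Proof. by move/allP => H x; apply: H; rewrite mem_oL. Qed.
Lemma fa15P P : fa15 P -> forall x, P x.
Proof. by move/allP => H x; apply: H; rewrite mem_o15. Qed.
Lemma ex4P P : ex4 P -> exists x, P x.
Proof. by case/hasP => x _ H; exists x. Qed.
Lemma exLP P : exL P -> exists x, P x.
Proof. by case/hasP => x _ H; exists x. Qed.
Lemma ex15P P : ex15 P -> exists x, P x.
Proof. by case/hasP => x _ H; exists x. Qed.

Lemma perm_o4 : perm_eq o4 (index_enum 'I_4).
Proof.
apply: uniq_perm; first by []; first exact: index_enum_uniq.
by move=> x; rewrite mem_o4 mem_index_enum.
Qed.
Lemma perm_oL : perm_eq oL (enum (predT : pred ('I_4 * 'I_4)%type)).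
Proof.
apply: uniq_perm; first by []; first exact: enum_uniq.
by move=> x; rewrite mem_oL mem_enum.
Qed.

Lemma emb_add x y : emb (gadd x y) = emb x + emb y.
Proof. by rewrite /emb /= !intrD mulrDl addrACA. Qed.
Lemma emb_mul x y : emb (gmul x y) = emb x * emb y.
Proof.
rewrite /emb /=.
set a := x.1; set b := x.2; set c := y.1; set d := y.2.
apply/eqP; rewrite -subr_eq0; apply/eqP.
have -> : ((a * c - b * d)%:~R + (a * d + b * c)%:~R * 'i -
   (a%:~R + b%:~R * 'i) * (c%:~R + d%:~R * 'i) : algC) = - (b * d)%:~R * ('i * 'i + 1).
  by ring.
by rewrite mulCii addNr mulr0.
Qed.
Lemma emb_conj x : emb (gconj x) = (emb x)^*.
Proof. rewrite /emb /= rmorphD rmorphM !rmorph_int intrN mulNr -mulrN. congr (_ + _ * _). by rewrite -conjCi. Qed.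
Lemma emb0 : emb g0 = 0.
Proof. by rewrite /emb /= mul0r addr0. Qed.
Lemma emb_gsum f : emb (gsum f) = \sum_j emb (f j).
Proof.
rewrite /gsum -(perm_big _ perm_o4) /= !big_cons big_nil !emb_add emb0 addr0 //.
Qed.
Lemma emb_inj : injective emb.
Proof.
move=> [a b] [c d]; rewrite /emb /= => H.
have HR : forall x y : int, 'Re (x%:~R + y%:~R * 'i : algC) = x%:~R.
  by move=> x y; rewrite mulrC Re_rect ?realz.
have HI : forall x y : int, 'Im (x%:~R + y%:~R * 'i : algC) = y%:~R.
  by move=> x y; rewrite mulrC Im_rect ?realz.
have := HR a b; have := HI a b; rewrite H HR HI => /intr_inj -> /intr_inj -> //.
Qed.

Lemma pauli1E k i j : pauli1 k i j = emb (p1Z k i j).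
Proof.
case: k => [[|[|[|[|n]]]] Hk]; rewrite /pauli1 /p1Z /= ?mxE;
case: i => [[|[|i]] Hi] //; case: j => [[|[|j]] Hj] //=; rewrite /emb /=;
rewrite ?mul0r ?addr0 ?add0r ?mul1r //.
by rewrite mulN1r.
Qed.

Lemma pauliE p i j : pauli p i j = emb (pZ p i j).
Proof. by rewrite /pauli /tensmx mxE !pauli1E emb_mul. Qed.

Lemma pauli_mulE p q i j : (pauli p *m pauli q) i j = emb (gmm (pZ p) (pZ q) i j).
Proof.
rewrite mxE /gmm emb_gsum; apply: eq_bigr => k _.
by rewrite !pauliE emb_mul.
Qed.

Lemma commP p q : pauli p *m pauli q = pauli q *m pauli p <-> commb p q.
Proof.
split.
  move=> H; apply/allP => i _; apply/allP => j _; apply/eqP; apply: emb_inj.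
  by rewrite -!pauli_mulE H.
move=> H; apply/matrixP => i j; rewrite !pauli_mulE.
by move/fa4P: H => /(_ i) /fa4P /(_ j) /eqP ->.
Qed.

Definition S (c : 'I_15) : {set pauli_label} := [set p | cls c p].

Lemma card_S c : #|S c| = count (cls c) oL.
Proof.
rewrite cardsE cardE -size_filter; apply: perm_size.
apply: uniq_perm; first exact: enum_uniq.
  by rewrite filter_uniq.
by move=> x; rewrite mem_enum mem_filter mem_oL andbT.
Qed.

Lemma max_S c : max_commuting_class (S c).
Proof.
have := fa15P check_cls_ok c.
move=> /and3P [H3 Hid Hc].
split; first by rewrite card_S; apply/eqP.
split; first by rewrite inE.
move=> p q; rewrite !inE => Hp Hq; apply/commP.
have H1 := faLP Hc p; have H2 := faLP H1 q.
move: H2; rewrite Hp Hq => /implyP H; apply: H; exact: isT.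
Qed.

Lemma classify C : max_commuting_class C -> exists c, C = S c.
Proof.
case=> H3 [Hid Hcomm].
have Hs : size (enum C) = 3%N by rewrite -cardE.
have Hu := enum_uniq C.
have Hm : forall p, (p \in C) = (p \in enum C) by move=> p; rewrite mem_enum.
move: Hs Hu Hm; case: (enum C) => [|x [|y [|z [|w s]]]] //= _ Hu Hm.
have xC : x \in C by rewrite Hm !inE eqxx.
have yC : y \in C by rewrite Hm !inE eqxx orbT.
have zC : z \in C by rewrite Hm !inE eqxx !orbT.
have nid : forall p, p \in C -> p != identity_label.
  by move=> p pC; apply/eqP => E; move: Hid; rewrite -E pC.
move: Hu; rewrite !inE negb_or => /andP [/andP [nxy nxz]] /andP [nyz _].
have cxy : commb x y by apply/commP; apply: Hcomm.
have cxz : commb x z by apply/commP; apply: Hcomm.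
have cyz : commb y z by apply/commP; apply: Hcomm.
have H1 := faLP check1_ok x; move: H1; rewrite (nid x xC) => /implyP /(_ isT) H1.
have H2 := faLP H1 y; move: H2; rewrite (nid y yC) nxy cxy => /implyP /(_ isT) H2.
have H3' := faLP H2 z; move: H3'; rewrite (nid z zC) nxz nyz cxz cyz => /implyP /(_ isT).
move=> /ex15P [c Hc].
exists c; apply/setP => p; rewrite inE Hm !inE.
have Hp := faLP Hc p; move/eqP: Hp => <-; rewrite orbA; exact: erefl.
Qed.

Lemma conjM (x y : algC) : (x * y)^* = x^* * y^*.
Proof. exact: rmorphM. Qed.
Lemma conj_sum (F : 'I_4 -> algC) : (\sum_i F i)^* = \sum_i (F i)^*.
Proof. exact: rmorph_sum. Qed.
Lemma conj_int (z : int) : (z%:~R : algC)^* = z%:~R.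
Proof. exact: rmorph_int. Qed.
Definition r (z : int) : algC := (sqrtC z%:~R)^-1.
Definition E (c : 'I_15) : 'M[algC]_4 := \matrix_(i, j) (r (kk c j) * emb (ev c j i)).

Lemma r_ge0 z : (0 <= z) -> 0 <= r z.
Proof. by move=> h; rewrite /r invr_ge0 sqrtC_ge0 ler0z. Qed.
Lemma r_conj z : (0 <= z) -> (r z)^* = r z.
Proof. by move=> h; apply: conj_Creal; apply: ger0_real; apply: r_ge0. Qed.
Lemma r_sq z : (0 < z) -> r z * r z * z%:~R = 1.
Proof.
move=> h; rewrite /r -invfM -expr2 sqrtCK mulVf //.
by rewrite intr_eq0; apply/eqP => E0; move: h; rewrite E0.
Qed.

Lemma inner_col (A B : 'M[algC]_4) i j : inner (col i A) (col j B) = (adjmx A *m B) i j.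
Proof. by rewrite /inner /adjmx !mxE; apply: eq_bigr => k _; rewrite !mxE. Qed.

Lemma kk_pos c k : 0 < kk c k.
Proof. by have := fa15P check_basis_ok c => /fa4P /(_ k) /fa4P /(_ k) /and4P []. Qed.

Lemma inner_E c c' k m : inner (col k (E c)) (col m (E c')) =
  r (kk c k) * r (kk c' m) * emb (ginner (ev c k) (ev c' m)).
Proof.
rewrite /inner /adjmx !mxE /ginner emb_gsum mulr_sumr; apply: eq_bigr => i _.
rewrite !mxE conjM r_conj ?ltW ?kk_pos // emb_mul emb_conj.
by rewrite mulrACA.
Qed.

Lemma E_orth c : adjmx (E c) *m E c = 1%:M.
Proof.
apply/matrixP => k m; rewrite -inner_col inner_E mxE.
have := fa15P check_basis_ok c => /fa4P /(_ k) /fa4P /(_ m) /and4P [_ /eqP -> _ _].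
case: eqP => [<-|_]; last by rewrite emb0 mulr0.
by rewrite /emb /= mul0r addr0 r_sq // kk_pos.
Qed.

Lemma emb_gsc z x : emb (gsc z x) = z%:~R * emb x.
Proof. by rewrite /emb /= !intrM mulrDr mulrA. Qed.

Lemma E_eig c p j : cls c p -> pauli p *m col j (E c) = (eigv c p j)%:~R *: col j (E c).
Proof.
move=> Hp; apply/matrixP => i z; rewrite !mxE.
have := fa15P check_basis_ok c => /fa4P /(_ j) /fa4P /(_ j) /and4P [_ _ _].
move/faLP => /(_ p); rewrite Hp /= => /fa4P /(_ i) /eqP H.
have -> : \sum_k pauli p i k * col j (E c) k z = r (kk c j) * emb (pv p (ev c j) i).
  rewrite /pv emb_gsum mulr_sumr; apply: eq_bigr => k _.
  by rewrite pauliE !mxE emb_mul mulrCA.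
by rewrite H emb_gsc ?mxE mulrCA.
Qed.

Lemma E_common c : common_eigenbasis (S c) (E c).
Proof.
split; first exact: E_orth.
move=> p; rewrite inE => Hp j; exists (eigv c p j)%:~R; exact: E_eig.
Qed.

Lemma mul_colE (M A : 'M[algC]_4) i j : (M *m col j A) i 0 = (M *m A) i j.
Proof. by rewrite !mxE; apply: eq_bigr => k _; rewrite !mxE. Qed.

Lemma pauli_herm p i j : (pauli p j i)^* = pauli p i j.
Proof.
rewrite !pauliE -emb_conj.
by have := faLP check_pauli_ok p => /andP [/fa4P /(_ i) /fa4P /(_ j) /eqP -> _].
Qed.

Lemma adjmx_mul m n q (A : 'M[algC]_(m, n)) (B : 'M[algC]_(n, q)) :
  adjmx (A *m B) = adjmx B *m adjmx A.
Proof.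
apply/matrixP => i j; rewrite /adjmx !mxE.
rewrite (rmorph_sum (Num.conj_op : {rmorphism algC -> algC})).
apply: eq_bigr => k _; rewrite !mxE rmorphM mulrC //.
Qed.

Lemma adjmx_pauli p : adjmx (pauli p) = pauli p.
Proof.
apply/matrixP => i j; have H := pauli_herm p i j.
rewrite /adjmx !mxE; rewrite !mxE in H; exact H.
Qed.

Lemma inner_pauli p (a b : 'cV[algC]_4) : inner a (pauli p *m b) = inner (pauli p *m a) b.
Proof. by rewrite /inner adjmx_mul adjmx_pauli mulmxA. Qed.

Lemma inner_scaleR (a b : 'cV[algC]_4) l : inner a (l *: b) = l * inner a b.
Proof.
rewrite /inner !mxE mulr_sumr; apply: eq_bigr => k _; by rewrite !mxE mulrCA.
Qed.
Lemma inner_scaleL (a b : 'cV[algC]_4) l : inner (l *: a) b = l^* * inner a b.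
Proof.
rewrite /inner !mxE mulr_sumr; apply: eq_bigr => k _; by rewrite !mxE conjM mulrA.
Qed.

Lemma notunb p (C C' : {set pauli_label}) (A B : 'M[algC]_4) : p \in C -> p \in C' -> p != identity_label ->
  common_eigenbasis C' A -> common_eigenbasis C B -> ~ unbiased A B.
Proof.
move=> pC pC' nid [HA eA] [HB eB] Hu.
have [lam Hb] := eB p pC ord0.
have mu : forall j, pauli p *m col j A = lam^* *: col j A.
  move=> j; have [m Hm] := eA p pC' j.
  have Hnz : inner (col j A) (col ord0 B) != 0.
    by rewrite -normr_eq0 Hu invr_eq0 sqrtC_eq0 pnatr_eq0.
  have : m^* * inner (col j A) (col ord0 B) = lam * inner (col j A) (col ord0 B).
    by rewrite -inner_scaleL -Hm -inner_pauli Hb inner_scaleR.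
  by move/(mulIf Hnz) => Hml; rewrite Hm -Hml conjCK.
have AA : A *m adjmx A = 1%:M by apply: mulmx1C.
have PA : pauli p *m A = lam^* *: A.
  apply/matrixP => i j; rewrite -mul_colE mu !mxE //.
have HP : pauli p = lam^* %:M.
  by rewrite -[pauli p]mulmx1 -AA mulmxA PA -scalemxAl AA scalemx1.
have := faLP check_pauli_ok p => /andP [_]; rewrite nid /= => /ex4P [i] /ex4P [j].
have Hij : pauli p i j = (lam^*)%:M i j by rewrite HP.
have Hii : pauli p i i = (lam^*)%:M i i by rewrite HP.
have Hjj : pauli p j j = (lam^*)%:M j j by rewrite HP.
rewrite !pauliE !mxE !eqxx /= in Hij Hii Hjj.
case/orP => [/andP [nij]|].
  rewrite (negbTE nij) mulr0n -emb0 in Hij; move=> H; move: H; rewrite (emb_inj Hij) eqxx; exact: id.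
by rewrite -Hjj in Hii; rewrite (emb_inj Hii) eqxx.
Qed.

Lemma scale_colE (M : 'M[algC]_4) x k l : (x *: col k M) l 0 = x * M l k.
Proof. by rewrite !mxE. Qed.

Lemma col_unique c B : common_eigenbasis (S c) B -> forall i,
  exists k alpha, col i B = alpha *: col k (E c) /\ `|alpha| = 1.
Proof.
move=> [HB eB] i.
have Haa : inner (col i B) (col i B) = 1 by rewrite inner_col HB mxE eqxx.
have EE : E c *m adjmx (E c) = 1%:M := mulmx1C (E_orth c).
set a := col i B in Haa *.
set w := adjmx (E c) *m a.
have Ha : a = E c *m w by rewrite /w mulmxA EE mul1mx.
have wE : forall k, w k 0 = inner (col k (E c)) a.
  by move=> k; rewrite /w /inner !mxE; apply: eq_bigr => l _; rewrite !mxE.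
have sgn : forall k p lam, cls c p -> w k 0 != 0 -> pauli p *m a = lam *: a ->
    (eigv c p k)%:~R = lam.
  move=> k p lam Hp Hw Hl; apply: (mulIf Hw).
  rewrite !wE -[RHS]inner_scaleR -Hl inner_pauli E_eig // inner_scaleL.
  by rewrite conj_int.
have [k0 Hk0] : exists k, w k 0 != 0.
  case: (pickP (fun k => w k 0 != 0)) => [k Hk|H]; first by exists k.
  have w0 : w = 0.
    apply/matrixP => k z; rewrite [z]ord1; have := H k; move=> /= /negbFE /eqP ->.
    by rewrite mxE.
  move: Haa; rewrite Ha w0 mulmx0 /inner mulmx0 mxE => /eqP; rewrite eq_sym oner_eq0 //.
have wz : forall k, k != k0 -> w k 0 = 0.
  move=> k nk; apply/eqP; apply/negPn/negP => Hw.
  have := fa15P check_basis_ok c => /fa4P /(_ k) /fa4P /(_ k0) /and4P [_ _].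
  rewrite nk /= => /exLP [p /andP [Hp Hne]] _.
  have pS : p \in S c by rewrite inE; exact: Hp.
  have [lam Hl] := eB p pS i.
  have h1 := sgn k p lam Hp Hw Hl; have h2 := sgn k0 p lam Hp Hk0 Hl.
  by move: Hne; rewrite -h2 in h1; rewrite (intr_inj h1) eqxx.
have Hae : a = w k0 0 *: col k0 (E c).
  apply/matrixP => l z; rewrite [z]ord1 {1}Ha [LHS]mxE (bigD1 k0) //= big1 ?addr0.
    by rewrite scale_colE mulrC.
  by move=> k nk; rewrite wz // mulr0.
exists k0, (w k0 0); split => //.
have He : inner (col k0 (E c)) (col k0 (E c)) = 1 by rewrite inner_col E_orth mxE eqxx.
move: Haa; rewrite Hae inner_scaleL inner_scaleR He mulr1 -normCKC => /eqP.
rewrite (sqrp_eq1 (normr_ge0 _)) => /eqP H; exact: H.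
Qed.

Lemma gnorm g : gmul g (gconj g) = (normsq g, 0).
Proof. rewrite /gmul /gconj /normsq /=; congr pair; ring. Qed.

Lemma norm_emb2 g : `|emb g| ^+ 2 = (normsq g)%:~R.
Proof. by rewrite normCK -emb_conj -emb_mul gnorm /emb /= mul0r addr0. Qed.

Lemma unb_E c c' k m : disjc c c' ->
  `|inner (col k (E c)) (col m (E c'))| = (sqrtC 4%:R)^-1.
Proof.
move=> D.
have := fa15P check_unb_ok c => /fa15P /(_ c'); rewrite D /= => /fa4P /(_ k) /fa4P /(_ m) /eqP H.
have g1 := ltW (kk_pos c k); have g2 := ltW (kk_pos c' m).
rewrite inner_E !normrM (ger0_norm (r_ge0 g1)) (ger0_norm (r_ge0 g2)).
apply/eqP; rewrite -(eqrXn2 (n := 2)) ?mulr_ge0 ?r_ge0 ?normr_ge0 ?invr_ge0 ?sqrtC_ge0 ?ler0n //.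
apply/eqP.
rewrite exprVn sqrtCK !exprMn norm_emb2.
have h1 := r_sq (kk_pos c k); have h2 := r_sq (kk_pos c' m).
have H' : (4 * normsq (ginner (ev c k) (ev c' m)))%:~R = (kk c k * kk c' m)%:~R :> algC by rewrite H.
rewrite !intrM in H'.
have int4 : ((4 : int)%:~R : algC) = 4%:R by [].
rewrite int4 in H'.
set N := (normsq _)%:~R in H' *.
set X := r (kk c k) ^+ 2 * r (kk c' m) ^+ 2.
have hX : X * (4%:R * N) = 1.
  by rewrite H' /X !expr2 mulrACA h1 h2 mulr1.
have nz4 : (4%:R : algC) != 0 by rewrite pnatr_eq0.
have e : X * N * 4%:R = 1 by rewrite -mulrA (mulrC N) hX.
by rewrite -(mulfK nz4 (X * N)) e mul1r.
Qed.

Lemma unb_S c c' B B' : disjc c c' -> common_eigenbasis (S c) B ->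
  common_eigenbasis (S c') B' -> unbiased B B'.
Proof.
move=> D HB HB' i j.
have [k [al [Ha Hal]]] := col_unique HB i.
have [m [be [Hb Hbe]]] := col_unique HB' j.
rewrite Ha Hb inner_scaleL inner_scaleR !normrM norm_conjC Hal Hbe !mul1r.
exact: unb_E.
Qed.

Lemma disjc_sym a b : disjc a b -> disjc b a.
Proof. move=> D; apply/allP => p _; rewrite andbC; exact: faLP D p. Qed.

Lemma disjc_set a b : S a :&: S b = set0 -> disjc a b.
Proof.
move=> H; apply/allP => p _.
have : p \in S a :&: S b = false by rewrite H inE.
by rewrite !inE => ->.
Qed.

Lemma set_disj a b : disjc a b -> S a :&: S b = set0.
Proof.
move=> D; apply/setP => p; rewrite !inE; apply/negbTE; exact: faLP D p.
Qed.

Lemma nid_cls c p : cls c p -> p != identity_label.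
Proof.
move=> Hp; apply/eqP=> E0.
have := fa15P check_cls_ok c => /and3P [_ H _].
by move: H; rewrite -E0 Hp.
Qed.

Lemma meets_notunb c c' B B' : meets c c' -> common_eigenbasis (S c') B' ->
  common_eigenbasis (S c) B -> ~ unbiased B' B.
Proof.
move=> /exLP [p /andP [H1 H2]] HB' HB.
apply: (@notunb p (S c) (S c')) => //; rewrite ?inE //.
exact: nid_cls H1.
Qed.

Unset Implicit Arguments.
Theorem corollary1 (C1 C2 : {set pauli_label}) :
  max_commuting_class C1 -> max_commuting_class C2 -> C1 :&: C2 = set0 ->
  exists C3 : {set pauli_label},
    [/\ max_commuting_class C3, C3 :&: C1 = set0, C3 :&: C2 = set0,
        (exists B1 B2 B3, [/\ common_eigenbasis C1 B1, common_eigenbasis C2 B2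
                            & common_eigenbasis C3 B3]) &
        (forall B1 B2 B3, common_eigenbasis C1 B1 -> common_eigenbasis C2 B2 ->
           common_eigenbasis C3 B3 ->
           weakly_unextendible [:: B1; B2; B3])].
Proof.
move=> M1 M2 D12.
have [c1 E1] := classify M1; have [c2 E2] := classify M2.
subst C1 C2.
have d12 := disjc_set D12.
have := fa15P check2_ok c1 => /fa15P /(_ c2); rewrite d12 => /implyP /(_ isT).
move=> /ex15P [c3 /and3P [d31 d32 Hall]].
exists (S c3); split.
- exact: max_S.
- exact: set_disj.
- exact: set_disj.
- by exists (E c1), (E c2), (E c3); split; apply: E_common.
move=> B1 B2 B3 H1 H2 H3; split.
  move=> i j hi hj nij.
  case: i hi nij => [|[|[|i]]] // _; case: j hj => [|[|[|j]]] // _ nij //=.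
  - exact: unb_S d12 H1 H2.
  - exact: unb_S (disjc_sym d31) H1 H3.
  - exact: unb_S (disjc_sym d12) H2 H1.
  - exact: unb_S (disjc_sym d32) H2 H3.
  - exact: unb_S d31 H3 H1.
  - exact: unb_S d32 H3 H2.
case=> C [B [MC [HC Hunb]]].
have [c Ec] := classify MC; subst C.
have := fa15P Hall c => /or3P [m|m|m].
- by apply: (meets_notunb m H1 HC); apply: Hunb; rewrite !inE eqxx.
- by apply: (meets_notunb m H2 HC); apply: Hunb; rewrite !inE eqxx ?orbT.
- by apply: (meets_notunb m H3 HC); apply: Hunb; rewrite !inE eqxx ?orbT.
Qed.
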